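(* Let $M$ be an $\mathbf{FB}$-module and $\phi$ a symmetric operation on $M$. Then $\phi$ satisfies condition (B3) if and only if it satisfies (B3$'$): $\phi[n]=(-1)^{n+1}\phi[1]$ for all $n\ge1$.
   Context: $k$ is a commutative ring; $\mathbf{FB}$-modules are functors from finite sets and bijections to $k$-modules. A symmetric operation $\phi$ on $M$ assigns to each finite set $S$ and subsets $A,B\subseteq S$ a linear map $\phi^S_{A,B}:M(S\setminus B)\to M(S\setminus A)$, natural with respect to bijections. For $n\in\mathbb N$, $\phi[n]$ is the family defined for disjoint $A,B\subseteq S$ by $\phi[n]^S_{A,B}=\phi^{S\sqcup[n]}_{A\sqcup[n],B\sqcup[n]}$, where $[n]=\{1,\dots,n\}$ is taken disjoint from $S$. Condition (B3): for every finite set $S$ and subsets $A,B,C,D\subseteq S$ with $A\cap B=\emptyset$, $C\cap D=\emptyset$, $A\cap C\ne\emptyset$ and $B\cap D\ne\emptyset$, $\sum_{X\subseteq B\cap D}\phi^{S\setminus X}_{(D\setminus X)\cup C,\,A\cup(B\setminus X)}=\sum_{X\subseteq A\cap C}\phi^{S\setminus X}_{(C\setminus X)\cup D,\,B\cup(A\setminus X)}$. *)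

(* Defs.v *)
From HB Require Import structures.
From mathcomp Require Import all_boot all_order all_algebra.
Set Implicit Arguments. Unset Strict Implicit. Unset Printing Implicit Defensive.
Import GRing.Theory.
Local Open Scope ring_scope.

(* A finite set is modelled as a pair (S, E) with S : finType and E : {set S}.
   A bijection between finite sets E ⊆ S and F ⊆ T is represented by a
   partial map f : S -> option T whose restriction to E is a bijection onto F. *)
Definition pbij (S T : finType) (E : {set S}) (F : {set T})
  (f : S -> option T) : Prop :=
  [/\ forall x, x \in E -> exists2 y, f x = Some y & y \in F,
      {in E &, forall x x', f x = f x' -> x = x'} &
      forall y, y \in F -> exists2 x, x \in E & f x = Some y].

Definition pimage (S T : finType) (f : S -> option T) (A : {set S}) : {set T} :=
  [set y | [exists x in A, f x == Some y]].

Record FBmodule (k : comPzRingType) := {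
  Mobj : forall S : finType, {set S} -> lmodType k;
  Mact : forall (S T : finType) (E : {set S}) (F : {set T}),
           (S -> option T) -> {linear Mobj E -> Mobj F};
  Mact_ext : forall (S T : finType) (E : {set S}) (F : {set T})
               (f g : S -> option T),
      pbij E F f -> {in E, f =1 g} ->
      Mact E F f =1 Mact E F g;
  Mact_id : forall (S : finType) (E : {set S}) (v : Mobj E),
      Mact E E (@Some S) v = v;
  Mact_comp : forall (S T U : finType) (E : {set S}) (F : {set T}) (G : {set U})
      (f : S -> option T) (g : T -> option U),
      pbij E F f -> pbij F G g ->
      forall v : Mobj E,
      Mact E G (fun x => obind g (f x)) v = Mact F G g (Mact E F f v)
}.

Arguments Mobj {k} _ {S} E.
Arguments Mact {k} _ {S T} E F _.

(* canonical identification between M(E) and M(F) when E = F as sets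
   (identity map of the ambient type) *)
Definition relab (k : comPzRingType) (M : FBmodule k) (S : finType)
  (E F : {set S}) : Mobj M E -> Mobj M F := Mact M E F (@Some S).
Arguments relab {k} M {S} E F.

(* Symmetric operations: phi^E_{A,B} : M(E \ B) -> M(E \ A), natural in
   bijections (only the values at A, B ⊆ E are meaningful). *)
Record symop (k : comPzRingType) (M : FBmodule k) := {
  phi : forall (S : finType) (E A B : {set S}),
          {linear Mobj M (E :\: B) -> Mobj M (E :\: A)};
  phi_nat : forall (S T : finType) (E A B : {set S}) (F : {set T})
      (f : S -> option T),
      A \subset E -> B \subset E -> pbij E F f ->
      forall v : Mobj M (E :\: B),
      phi F (pimage f A) (pimage f B) (Mact M (E :\: B) (F :\: pimage f B) f v)
      = Mact M (E :\: A) (F :\: pimage f A) f (phi E A B v)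
}.

Arguments phi {k M} _ {S} E A B.

(* A ⊔ [n] inside the ambient type S + 'I_n *)
Definition lift_set (S : finType) (n : nat) (A : {set S}) : {set S + 'I_n} :=
  [set x | match x with inl s => s \in A | inr _ => true end].

Definition inl_part (S : finType) (n : nat) (x : S + 'I_n) : option S :=
  match x with inl s => Some s | inr _ => None end.

(* phi[n]^E_{A,B} = phi^{E ⊔ [n]}_{A ⊔ [n], B ⊔ [n]}, transported along the
   identifications (E⊔[n]) \ (B⊔[n]) = E \ B and (E⊔[n]) \ (A⊔[n]) = E \ A. *)
Definition phi_shift (k : comPzRingType) (M : FBmodule k) (p : symop M)
  (n : nat) (S : finType) (E A B : {set S}) (v : Mobj M (E :\: B))
  : Mobj M (E :\: A) :=
  Mact M (lift_set n E :\: lift_set n A) (E :\: A) (@inl_part S n)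
    (phi p (lift_set n E) (lift_set n A) (lift_set n B)
       (Mact M (E :\: B) (lift_set n E :\: lift_set n B)
          (fun s => Some (@inl S 'I_n s)) v)).

Arguments phi_shift {k M} p n {S} E A B v.

Definition condB3 (k : comPzRingType) (M : FBmodule k) (p : symop M) : Prop :=
  forall (S : finType) (E A B C D : {set S}),
    A \subset E -> B \subset E -> C \subset E -> D \subset E ->
    A :&: B = set0 -> C :&: D = set0 ->
    A :&: C != set0 -> B :&: D != set0 ->
    forall v : Mobj M (E :\: (A :|: B)),
    \sum_(X : {set S} | X \subset B :&: D)
       relab M (E :\: X :\: ((D :\: X) :|: C)) (E :\: (C :|: D))
         (phi p (E :\: X) ((D :\: X) :|: C) (A :|: (B :\: X))
            (relab M (E :\: (A :|: B)) (E :\: X :\: (A :|: (B :\: X))) v))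
    =
    \sum_(X : {set S} | X \subset A :&: C)
       relab M (E :\: X :\: ((C :\: X) :|: D)) (E :\: (C :|: D))
         (phi p (E :\: X) ((C :\: X) :|: D) (B :|: (A :\: X))
            (relab M (E :\: (A :|: B)) (E :\: X :\: (B :|: (A :\: X))) v)).

Definition condB3' (k : comPzRingType) (M : FBmodule k) (p : symop M) : Prop :=
  forall (n : nat), (1 <= n)%N ->
  forall (S : finType) (E A B : {set S}),
    A \subset E -> B \subset E -> A :&: B = set0 ->
    forall v : Mobj M (E :\: B),
    phi_shift p n E A B v = (-1) ^+ n.+1 *: phi_shift p 1 E A B v.

(* Main.v *)
Require Import Defs.
From mathcomp Require Import all_boot all_order all_algebra.
Set Implicit Arguments. Unset Strict Implicit. Unset Printing Implicit Defensive.
Import GRing.Theory.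
Local Open Scope ring_scope.

Lemma pbij_setD (S T : finType) (E X : {set S}) (F : {set T}) f :
  pbij E F f -> X \subset E -> pbij (E :\: X) (F :\: pimage f X) f.
Proof.
case=> h1 h2 h3 hX; split.
- move=> x; rewrite inE => /andP [xX xE].
  have [y fy yF] := h1 x xE; exists y => //.
  rewrite !inE yF andbT; apply/existsP => -[x' /andP [x'X /eqP fx']].
  have ex : x' = x by apply: h2 => //; [exact: (subsetP hX) | rewrite fx' fy].
  by move: xX; rewrite -ex x'X.
- by move=> x x'; rewrite !inE => /andP [_ xE] /andP [_ x'E]; apply: h2.
- move=> y; rewrite !inE => /andP [yX yF].
  have [x xE fx] := h3 y yF; exists x => //.
  rewrite !inE xE andbT; apply/negP => xX; move/negP: yX; apply.
  by apply/existsP; exists x; rewrite xX fx eqxx.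
Qed.

Lemma pbij_comp (S T U : finType) (E : {set S}) (F : {set T}) (G : {set U}) f g :
  pbij E F f -> pbij F G g -> pbij E G (fun x => obind g (f x)).
Proof.
case=> f1 f2 f3 [g1 g2 g3]; split.
- move=> x xE; have [y fy yF] := f1 x xE; rewrite fy /=; exact: g1.
- move=> x x' xE x'E; have [y fy yF] := f1 x xE; have [y' fy' y'F] := f1 x' x'E.
  rewrite fy fy' /= => e; apply: f2 => //; rewrite fy fy'; congr Some; exact: g2.
- move=> z zG; have [y yF gy] := g3 z zG; have [x xE fx] := f3 y yF.
  by exists x => //; rewrite fx.
Qed.

Lemma pbij_Some (S : finType) (E F : {set S}) : E = F -> pbij E F (@Some S).
Proof.
move=> <-; split.
- by move=> x xE; exists x.
- by move=> x x' _ _ [].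
- by move=> y yE; exists y.
Qed.

Lemma pimage_Some (S : finType) (A : {set S}) : pimage (@Some S) A = A.
Proof.
apply/setP => y; rewrite inE; apply/existsP/idP.
- by case=> x /andP [xA /eqP [<-]].
- by move=> yA; exists y; rewrite yA eqxx.
Qed.

Ltac bs H x := move: (H x); rewrite ?inE;
  repeat (match goal with |- context [x \in ?Z] => case: (x \in Z) end); done.

Section WithM.
Variables (k : comPzRingType) (M : FBmodule k) (p : symop M).

Lemma Mact_relab (S T : finType) (E : {set S}) (F F' : {set T}) f (v : Mobj M E) :
  pbij E F f -> F = F' -> Mact M F F' (@Some T) (Mact M E F f v) = Mact M E F' f v.
Proof. by move=> _ e; case: F' / e; rewrite Mact_id. Qed.

Lemma Mact_inv (S T : finType) (E : {set S}) (F : {set T}) f f' (v : Mobj M E) :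
  pbij E F f -> pbij F E f' -> {in E, forall x, obind f' (f x) = Some x} ->
  Mact M F E f' (Mact M E F f v) = v.
Proof.
move=> hf hf' hx; rewrite -Mact_comp //.
rewrite (@Mact_ext _ M _ _ _ _ _ (@Some S)) ?Mact_id //.
exact: pbij_comp hf hf'.
Qed.


Lemma pbij_inl (S : finType) n (E0 B0 : {set S}) :
  pbij (E0 :\: B0) (lift_set n E0 :\: lift_set n B0) (fun s => Some (@inl S 'I_n s)).
Proof.
split.
- by move=> x xE; exists (inl x) => //; move: xE; rewrite !inE.
- by move=> x x' _ _ [].
- case=> [s|i]; rewrite !inE //= => h; by exists s; rewrite ?inE.
Qed.

Lemma pbij_inl_part (S : finType) n (E0 A0 : {set S}) :
  pbij (lift_set n E0 :\: lift_set n A0) (E0 :\: A0) (@inl_part S n).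
Proof.
split.
- by case=> [s|i]; rewrite !inE //= => h; exists s; rewrite ?inE.
- by case=> [s|i] [s'|i']; rewrite !inE //= => _ _ [->].
- by move=> y yE; exists (inl y); rewrite // !inE; move: yE; rewrite !inE.
Qed.

Lemma L1 (S0 S : finType) m (E0 A0 B0 : {set S0}) (E A B : {set S})
  (h : S0 + 'I_m -> option S) :
  A0 \subset E0 -> B0 \subset E0 -> pbij (lift_set m E0) E h ->
  pimage h (lift_set m A0) = A -> pimage h (lift_set m B0) = B ->
  forall w, Mact M (E0 :\: A0) (E :\: A) (fun x => h (inl x)) (phi_shift p m E0 A0 B0 w)
    = phi p E A B (Mact M (E0 :\: B0) (E :\: B) (fun x => h (inl x)) w).
Proof.
move=> sA sB hh eA eB w; subst A B.
have sA' : lift_set m A0 \subset lift_set m E0.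
  by apply/subsetP; case=> [s|i]; rewrite !inE //=; apply: (subsetP sA).
have sB' : lift_set m B0 \subset lift_set m E0.
  by apply/subsetP; case=> [s|i]; rewrite !inE //=; apply: (subsetP sB).
have hB := pbij_setD hh sB'. have hA := pbij_setD hh sA'.
have e1 := Mact_comp (pbij_inl m E0 B0) hB w. simpl in e1.
rewrite e1 phi_nat //.
rewrite /phi_shift -Mact_comp; [ | exact (pbij_inl_part m E0 A0) | exact (pbij_comp (pbij_inl m E0 A0) hA)].
have hp := pbij_comp (pbij_inl_part m E0 A0) (pbij_comp (pbij_inl m E0 A0) hA).
apply: (Mact_ext hp).
by case=> [s|i]; rewrite !inE.
Qed.


Lemma pbij_eqF (S T : finType) (E : {set S}) (F F' : {set T}) f :
  pbij E F f -> F = F' -> pbij E F' f.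
Proof. by move=> h <-. Qed.

Lemma TL (S0 S : finType) (E A B C D X J U V : {set S}) (E0 A0 B0 : {set S0})
  (g : S0 -> option S) :
  A \subset E -> B \subset E -> C \subset E -> D \subset E ->
  A :&: B = set0 -> C :&: D = set0 -> X \subset B :&: D ->
  J = (A :&: D) :|: (B :&: C) :|: (A :&: C) :|: (B :&: D) ->
  U = E :\: (A :|: B) -> V = E :\: (C :|: D) ->
  A0 \subset E0 -> B0 \subset E0 -> pbij E0 (E :\: J) g ->
  pimage g A0 = (C :|: D) :\: J -> pimage g B0 = (A :|: B) :\: J ->
  forall w : Mobj M (E0 :\: B0),
  relab M (E :\: X :\: ((D :\: X) :|: C)) V
    (phi p (E :\: X) ((D :\: X) :|: C) (A :|: (B :\: X))
       (relab M U (E :\: X :\: (A :|: (B :\: X))) (Mact M (E0 :\: B0) U g w)))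
  = Mact M (E0 :\: A0) V g (phi_shift p (#|J| - #|X|) E0 A0 B0 w).
Proof.
move=> hA hB hC hD hAB hCD hX hJ hU hV sA0 sB0 hg eA0 eB0 w.
have hA' x : (x \in A) ==> (x \in E) by apply/implyP/(subsetP hA).
have hB' x : (x \in B) ==> (x \in E) by apply/implyP/(subsetP hB).
have hC' x : (x \in C) ==> (x \in E) by apply/implyP/(subsetP hC).
have hD' x : (x \in D) ==> (x \in E) by apply/implyP/(subsetP hD).
have hAB' x : ~~ ((x \in A) && (x \in B)) by rewrite -in_setI hAB inE.
have hCD' x : ~~ ((x \in C) && (x \in D)) by rewrite -in_setI hCD inE.
have hX' x : (x \in X) ==> (x \in B) && (x \in D)
  by apply/implyP => /(subsetP hX); rewrite inE.
have H x : [&& (x \in A) ==> (x \in E), (x \in B) ==> (x \in E), (x \in C) ==> (x \in E),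
   (x \in D) ==> (x \in E), ~~ ((x \in A) && (x \in B)), ~~ ((x \in C) && (x \in D)) &
   (x \in X) ==> (x \in B) && (x \in D)] by rewrite hA' hB' hC' hD' hAB' hCD' hX'.
clear hA' hB' hC' hD' hAB' hCD' hX'.
subst J U V.
set I := ((D :\: X) :|: C) :&: (A :|: (B :\: X)).
set J := (A :&: D) :|: (B :&: C) :|: (A :&: C) :|: (B :&: D).
have eI : I = J :\: X by apply/setP => x; rewrite /I /J; bs H x.
have XJ : X \subset J by apply/subsetP => x; rewrite /J; bs H x.
have hm : #|I| = (#|J| - #|X|)%N by rewrite eI cardsD (setIidPr XJ).
clearbody I.
pose h (z : S0 + 'I_#|I|) : option S :=
  match z with inl s => g s | inr i => Some (enum_val i) end.
have P1 y : y \in E :\: J -> y \in E :\: X by move=> /= Hy; move: Hy; rewrite /J; bs H y.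
have P2 y : y \in I -> y \in E :\: X by move=> Hy; move: Hy; rewrite eI /J; bs H y.
have P3 y : y \in I -> y \in E :\: J -> False by move=> Hy Hy'; move: Hy Hy'; rewrite eI /J; bs H y.
have P4 y : y \in E :\: X -> y \in J -> y \in I by rewrite eI !inE => /andP [-> _] ->.
case: (hg) => g1 g2 g3.
have hh : pbij (lift_set #|I| E0) (E :\: X) h.
  split.
  - case=> [s|i]; rewrite inE /=.
    + by move=> sE; have [y gy yF] := g1 s sE; exists y => //; apply: P1.
    + by move=> _; exists (enum_val i) => //; apply: P2; apply: enum_valP.
  - case=> [s|i] [s'|i']; rewrite !inE /=.
    + by move=> sE s'E e; congr inl; apply: g2.
    + move=> sE _ e; have [y gy yF] := g1 s sE; exfalso; apply: (P3 y) => //.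
      by move: e; rewrite gy => -[->]; apply: enum_valP.
    + move=> _ sE e; have [y gy yF] := g1 s' sE; exfalso; apply: (P3 y) => //.
      by move: e; rewrite gy => -[<-]; apply: enum_valP.
    + by move=> _ _ [/enum_val_inj ->].
  - move=> y yEX; have [yJ|yJ] := boolP (y \in J).
    + have yI := P4 y yEX yJ.
      by exists (inr (enum_rank_in yI y)); rewrite ?inE //= enum_rankK_in.
    + have yEJ : y \in E :\: J by apply/setDP; split => //; case/setDP: yEX.
      by have [x xE gx] := g3 y yEJ; exists (inl x); rewrite ?inE.
have pim Z : pimage h (lift_set #|I| Z) = pimage g Z :|: I.
  apply/setP => y; rewrite !inE; apply/existsP/orP.
  - case=> -[s|i]; rewrite inE /=.
    + by move=> /andP [sZ /eqP e]; left; apply/existsP; exists s; rewrite sZ e eqxx.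
    + by move=> /eqP [<-]; right; apply: enum_valP.
  - case.
    + by case/existsP=> s /andP [sZ e]; exists (inl s); rewrite inE sZ.
    + by move=> yI; exists (inr (enum_rank_in yI y)); rewrite inE /= enum_rankK_in.
have eA' : pimage h (lift_set #|I| A0) = (D :\: X) :|: C.
  by rewrite pim eA0; apply/setP => x; rewrite eI /J; bs H x.
have eB' : pimage h (lift_set #|I| B0) = A :|: (B :\: X).
  by rewrite pim eB0; apply/setP => x; rewrite eI /J; bs H x.
have e := L1 sA0 sB0 hh eA' eB' w.
change (fun x => h (inl x)) with g in e.
have hgB : pbij (E0 :\: B0) (E :\: (A :|: B)) g.
  apply: (pbij_eqF (pbij_setD hg sB0)).
  by rewrite eB0; apply/setP => x; rewrite /J; bs H x.
have hgA : pbij (E0 :\: A0) (E :\: X :\: ((D :\: X) :|: C)) g.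
  apply: (pbij_eqF (pbij_setD hg sA0)).
  by rewrite eA0; apply/setP => x; rewrite /J; bs H x.
have eU1 : E :\: (A :|: B) = E :\: X :\: (A :|: (B :\: X)).
  by apply/setP => x; bs H x.
have eV1 : E :\: X :\: ((D :\: X) :|: C) = E :\: (C :|: D).
  by apply/setP => x; bs H x.
rewrite /relab (Mact_relab _ hgB eU1) -e (Mact_relab _ hgA eV1) hm.
by [].
Qed.


End WithM.

Lemma sum_subsets (V : nmodType) (T : finType) (Q : {set T}) (F : nat -> V) :
  \sum_(X : {set T} | X \subset Q) F #|X| = \sum_(i < #|Q|.+1) F i *+ 'C(#|Q|, i).
Proof.
rewrite (partition_big (fun X : {set T} => (inord #|X| : 'I_#|Q|.+1)) predT) //=.
apply: eq_bigr => i _.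
rewrite (eq_bigr (fun _ => F i)); last first.
  by move=> X /andP [sXQ /eqP <-]; rewrite inordK // ltnS subset_leq_card.
rewrite big_const iter_addr_0; congr (_ *+ _).
rewrite -cards_draws; apply: eq_card => X; rewrite unfold_in /= inE.
have [sXQ|] //= := boolP (X \subset Q).
have lt : (#|X| < #|Q|.+1)%N by rewrite ltnS subset_leq_card.
by apply/eqP/eqP; [move=> <-; rewrite inordK | move=> ->; apply: inord_val].
Qed.

Lemma sum_sign_subsets (R : pzRingType) (T : finType) (Q : {set T}) :
  Q != set0 -> \sum_(X : {set T} | X \subset Q) (-1) ^+ #|X| = 0 :> R.
Proof.
move=> hQ; rewrite (@sum_subsets _ _ Q (fun n => (-1) ^+ n : R)) -exprD1n addNr expr0n.
by rewrite eqn0Ngt card_gt0 hQ.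
Qed.

Lemma sign_sub (R : pzRingType) (a b : nat) : (b <= a)%N ->
  (-1) ^+ (a - b).+1 = (-1) ^+ a.+1 * (-1) ^+ b :> R.
Proof.
move=> hb; rewrite -{2}(subnK hb) -addSn exprD -mulrA -expr2 sqrr_sign mulr1 //.
Qed.

Lemma card_pos (S : finType) (X J P : {set S}) :
  X \subset J -> P \subset J :\: X -> P != set0 -> (1 <= #|J| - #|X|)%N.
Proof.
move=> XJ PJ P0; rewrite -(setIidPr XJ) -cardsD.
by apply: leq_trans (subset_leq_card PJ); rewrite card_gt0.
Qed.

Section Dir1.
Variables (k : comPzRingType) (M : FBmodule k) (p : symop M).

Lemma dir1 : condB3' p -> condB3 p.
Proof.
move=> h3 S E A B C D hA hB hC hD hAB hCD hAC hBD v.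
have hA' x : (x \in A) ==> (x \in E) by apply/implyP/(subsetP hA).
have hB' x : (x \in B) ==> (x \in E) by apply/implyP/(subsetP hB).
have hC' x : (x \in C) ==> (x \in E) by apply/implyP/(subsetP hC).
have hD' x : (x \in D) ==> (x \in E) by apply/implyP/(subsetP hD).
have hAB' x : ~~ ((x \in A) && (x \in B)) by rewrite -in_setI hAB inE.
have hCD' x : ~~ ((x \in C) && (x \in D)) by rewrite -in_setI hCD inE.
have H x : [&& (x \in A) ==> (x \in E), (x \in B) ==> (x \in E), (x \in C) ==> (x \in E),
   (x \in D) ==> (x \in E), ~~ ((x \in A) && (x \in B)) & ~~ ((x \in C) && (x \in D))]
   by rewrite hA' hB' hC' hD' hAB' hCD'.
set J := (A :&: D) :|: (B :&: C) :|: (A :&: C) :|: (B :&: D).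
set E0 := E :\: J. set A0 := (C :|: D) :\: J. set B0 := (A :|: B) :\: J.
have sA0 : A0 \subset E0 by apply/subsetP => x; rewrite /A0 /E0 /J; bs H x.
have sB0 : B0 \subset E0 by apply/subsetP => x; rewrite /B0 /E0 /J; bs H x.
have dAB0 : A0 :&: B0 = set0 by apply/setP => x; rewrite /A0 /B0 /J; bs H x.
have hg : pbij E0 (E :\: J) (@Some S) by exact: pbij_Some.
have eBJ : E0 :\: B0 = E :\: (A :|: B) by apply/setP => x; rewrite /B0 /E0 /J; bs H x.
pose w := relab M (E :\: (A :|: B)) (E0 :\: B0) v.
have ev : v = Mact M (E0 :\: B0) (E :\: (A :|: B)) (@Some S) w.
  by rewrite /w /relab (Mact_relab _ (pbij_Some (esym eBJ)) eBJ) Mact_id.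
set Y := Mact M (E0 :\: A0) (E :\: (C :|: D)) (@Some S) (phi_shift p 1 E0 A0 B0 w).
have term (X P : {set S}) : X \subset J -> P \subset J :\: X -> P != set0 ->
    Mact M (E0 :\: A0) (E :\: (C :|: D)) (@Some S) (phi_shift p (#|J| - #|X|) E0 A0 B0 w)
    = ((-1) ^+ #|J|.+1 * (-1) ^+ #|X|) *: Y.
  move=> XJ PJ P0.
  rewrite h3 //; last exact: card_pos PJ P0.
  by rewrite linearZ /= sign_sub // subset_leq_card.
rewrite ev.
rewrite (eq_bigr (fun X : {set S} => ((-1) ^+ #|J|.+1 * (-1) ^+ #|X|) *: Y)); last first.
  move=> X hX; rewrite (TL p hA hB hC hD hAB hCD hX (erefl J) erefl erefl sA0 sB0 hg
     (pimage_Some A0) (pimage_Some B0) w).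
  apply: (term _ (A :&: C)) => //.
    by apply/subsetP => x; move/subsetP: hX => /(_ x); rewrite /J; bs H x.
  by apply/subsetP => x; move/subsetP: hX => /(_ x); rewrite /J; bs H x.
rewrite [RHS](eq_bigr (fun X : {set S} => ((-1) ^+ #|J|.+1 * (-1) ^+ #|X|) *: Y)); last first.
  move=> X hX.
  have hBA : B :&: A = set0 by rewrite setIC.
  have hDC : D :&: C = set0 by rewrite setIC.
  have eJ : J = B :&: C :|: A :&: D :|: B :&: D :|: A :&: C by apply/setP => x; rewrite /J; bs H x.
  have eU : E :\: (A :|: B) = E :\: (B :|: A) by rewrite setUC.
  have eV : E :\: (C :|: D) = E :\: (D :|: C) by rewrite setUC.
  have eA0 : pimage Some A0 = (D :|: C) :\: J by rewrite pimage_Some /A0 setUC.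
  have eB0 : pimage Some B0 = (B :|: A) :\: J by rewrite pimage_Some /B0 setUC.
  rewrite (TL p hB hA hD hC hBA hDC hX eJ eU eV sA0 sB0 hg eA0 eB0 w).
  apply: (term _ (B :&: D)) => //.
    by apply/subsetP => x; move/subsetP: hX => /(_ x); rewrite /J; bs H x.
  by apply/subsetP => x; move/subsetP: hX => /(_ x); rewrite /J; bs H x.
rewrite -!scaler_suml -!mulr_sumr !sum_sign_subsets //.
Qed.

End Dir1.

Definition linl (S : finType) (N : nat) (Z : {set S}) : {set S + 'I_N} :=
  [set x | if x is inl s then s \in Z else false].
Definition rset (S : finType) (N : nat) (Z : {set 'I_N}) : {set S + 'I_N} :=
  [set x | if x is inr i then i \in Z else false].

Lemma card_rset (S : finType) N (Z : {set 'I_N}) : #|rset S Z| = #|Z|.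
Proof.
have -> : rset S Z = inr @: Z.
  apply/setP => -[s|i]; rewrite inE /=.
    by apply/esym/imsetP => -[j _].
  by rewrite mem_imset //; apply: inr_inj.
by rewrite card_imset //; apply: inr_inj.
Qed.

Lemma pimage_inl (S : finType) N (Z : {set S}) :
  pimage (fun s => Some (@inl S 'I_N s)) Z = linl N Z.
Proof.
apply/setP => -[s|i]; rewrite !inE /=.
- apply/existsP/idP.
  + by case=> x /andP [xZ /eqP [<-]].
  + by move=> sZ; exists s; rewrite sZ eqxx.
- by apply/existsP => -[x /andP [_ /eqP]].
Qed.

Lemma pbij_linl (S : finType) N (Z : {set S}) :
  pbij Z (linl N Z) (fun s => Some (@inl S 'I_N s)).
Proof.
split.
- by move=> x xZ; exists (inl x); rewrite ?inE.
- by move=> x x' _ _ [[]].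
- by case=> [s|i]; rewrite inE //= => sZ; exists s.
Qed.

Lemma pbij_linl_inv (S : finType) N (Z : {set S}) :
  pbij (linl N Z) Z (@inl_part S N).
Proof.
split.
- by case=> [s|i]; rewrite inE //= => sZ; exists s.
- by case=> [s|i] [s'|i']; rewrite !inE //= => _ _ [->].
- by move=> y yZ; exists (inl y); rewrite ?inE.
Qed.

Ltac bs2 H x := move: (H x); rewrite ?inE /=; rewrite ?inE;
  repeat (match goal with |- context [x \in ?Z] => case: (x \in Z) end); done.

Lemma Jswap (T : finType) (a b c d : {set T}) :
  a :&: d :|: b :&: c :|: a :&: c :|: b :&: d = b :&: c :|: a :&: d :|: b :&: d :|: a :&: c.
Proof.
apply/setP => x; rewrite !inE; case: (x \in a); case: (x \in b); case: (x \in c); by case: (x \in d).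
Qed.

Section Dir2.
Variables (k : comPzRingType) (M : FBmodule k) (p : symop M).

Lemma rec_step : condB3 p -> forall n, (1 <= n)%N ->
  forall (S : finType) (E A B : {set S}), A \subset E -> B \subset E -> A :&: B = set0 ->
  forall w : Mobj M (E :\: B),
  phi_shift p n.+1 E A B w = - phi_shift p n E A B w.
Proof.
move=> h3 n hn S E A B hA hB hAB w.
pose N := n.+2.
have [P0 [Q0 [cP [cQ dPQ]]]] : exists P0 Q0 : {set 'I_N},
    [/\ #|P0| = 2%N, #|Q0| = 1%N & P0 :&: Q0 = set0].
  exists [set ord0; inord 1], [set inord 2]; split.
  - rewrite cards2; suff -> : (ord0 != inord 1 :> 'I_N) = true by [].
    by apply/eqP => /(congr1 val) /=; rewrite inordK.
  - by rewrite cards1.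
  - apply/setP => i; rewrite !inE; apply/negbTE/andP => -[/orP [] /eqP -> /eqP /(congr1 val) /=].
      by rewrite inordK.
    by rewrite !inordK.
have HI i : ~~ ((i \in P0) && (i \in Q0)) by rewrite -in_setI dPQ inE.
have HS s : [&& (s \in A) ==> (s \in E), (s \in B) ==> (s \in E) & ~~ ((s \in A) && (s \in B))].
  by rewrite -in_setI hAB inE andbT; apply/andP; split; apply/implyP; apply/subsetP.
pose R0 := ~: (P0 :|: Q0).
pose Ah := linl N B :|: rset S P0 :|: rset S R0.
pose Bh := rset S Q0.
pose Ch := linl N A :|: rset S P0.
pose Dh := rset S Q0 :|: rset S R0.
pose Eh := lift_set N E.
pose Jh := (Ah :&: Dh) :|: (Bh :&: Ch) :|: (Ah :&: Ch) :|: (Bh :&: Dh).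
pose g := fun s : S => Some (@inl S 'I_N s).
have sAh : Ah \subset Eh by apply/subsetP => -[s|i]; rewrite /Ah /Eh; [bs2 HS s | bs2 HI i].
have sBh : Bh \subset Eh by apply/subsetP => -[s|i]; rewrite /Bh /Eh; [bs2 HS s | bs2 HI i].
have sCh : Ch \subset Eh by apply/subsetP => -[s|i]; rewrite /Ch /Eh; [bs2 HS s | bs2 HI i].
have sDh : Dh \subset Eh by apply/subsetP => -[s|i]; rewrite /Dh /Eh; [bs2 HS s | bs2 HI i].
have hABh : Ah :&: Bh = set0 by apply/setP => -[s|i]; rewrite /Ah /Bh; [bs2 HS s | bs2 HI i].
have hCDh : Ch :&: Dh = set0 by apply/setP => -[s|i]; rewrite /Ch /Dh /R0; [bs2 HS s | bs2 HI i].
have eJE : linl N E = Eh :\: Jh.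
  by apply/setP => -[s|i]; rewrite /Jh /Ah /Bh /Ch /Dh /Eh /R0; [bs2 HS s | bs2 HI i].
have hg : pbij E (Eh :\: Jh) g by rewrite -eJE; apply: pbij_linl.
have eA : pimage g A = (Ch :|: Dh) :\: Jh.
  rewrite pimage_inl.
  by apply/setP => -[s|i]; rewrite /Jh /Ah /Bh /Ch /Dh /Eh /R0; [bs2 HS s | bs2 HI i].
have eB : pimage g B = (Ah :|: Bh) :\: Jh.
  rewrite pimage_inl.
  by apply/setP => -[s|i]; rewrite /Jh /Ah /Bh /Ch /Dh /Eh /R0; [bs2 HS s | bs2 HI i].
have cJ : #|Jh| = N.
  have -> : Jh = rset S setT.
    by apply/setP => -[s|i]; rewrite /Jh /Ah /Bh /Ch /Dh /Eh /R0; [bs2 HS s | bs2 HI i].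
  by rewrite card_rset cardsT card_ord.
have c1 : #|Bh :&: Dh| = 1%N.
  have -> : Bh :&: Dh = rset S Q0.
    by apply/setP => -[s|i]; rewrite /Ah /Bh /Ch /Dh /Eh /R0; [bs2 HS s | bs2 HI i].
  by rewrite card_rset.
have c2 : #|Ah :&: Ch| = 2%N.
  have -> : Ah :&: Ch = rset S P0.
    by apply/setP => -[s|i]; rewrite /Ah /Bh /Ch /Dh /Eh /R0; [bs2 HS s | bs2 HI i].
  by rewrite card_rset.
have neAC : Ah :&: Ch != set0 by rewrite -card_gt0 c2.
have neBD : Bh :&: Dh != set0 by rewrite -card_gt0 c1.
pose v := Mact M (E :\: B) (Eh :\: (Ah :|: Bh)) g w.
have := h3 _ Eh Ah Bh Ch Dh sAh sBh sCh sDh hABh hCDh neAC neBD v.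
pose F k := Mact M (E :\: A) (Eh :\: (Ch :|: Dh)) g (phi_shift p (#|Jh| - k) E A B w).
rewrite (eq_bigr (fun X : {set S + 'I_N} => F #|X|)); last first.
  by move=> X hX; apply: (TL p sAh sBh sCh sDh hABh hCDh hX (erefl Jh) erefl erefl hA hB hg eA eB w).
rewrite [RHS](eq_bigr (fun X : {set S + 'I_N} => F #|X|)); last first.
  move=> X hX.
  have hBA : Bh :&: Ah = set0 by rewrite setIC.
  have hDC : Dh :&: Ch = set0 by rewrite setIC.
  have eJ : Jh = Bh :&: Ch :|: Ah :&: Dh :|: Bh :&: Dh :|: Ah :&: Ch.
    by rewrite /Jh Jswap.
  have eU : Eh :\: (Ah :|: Bh) = Eh :\: (Bh :|: Ah) by rewrite setUC.
  have eV : Eh :\: (Ch :|: Dh) = Eh :\: (Dh :|: Ch) by rewrite setUC.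
  have eA' : pimage g A = (Dh :|: Ch) :\: Jh by rewrite eA setUC.
  have eB' : pimage g B = (Bh :|: Ah) :\: Jh by rewrite eB setUC.
  exact: (TL p sBh sAh sDh sCh hBA hDC hX eJ eU eV hA hB hg eA' eB' w).
rewrite !sum_subsets c1 c2 !big_ord_recr !big_ord0 /= !bin0 !binn bin1 !mulr1n mulr2n !add0r.
move=> e.
have e2 : F 1%N + F 2%N = 0.
  apply: (@addrI _ (F 0%N + F 1%N)); rewrite addr0 [RHS]e.
  by rewrite !addrA.
have hV : Eh :\: (Ch :|: Dh) = linl N (E :\: A).
  by apply/setP => -[s|i]; rewrite /Ah /Bh /Ch /Dh /Eh /R0; [bs2 HS s | bs2 HI i].
have hgV : pbij (E :\: A) (Eh :\: (Ch :|: Dh)) g by rewrite hV; apply: pbij_linl.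
have hgV' : pbij (Eh :\: (Ch :|: Dh)) (E :\: A) (@inl_part S N) by rewrite hV; apply: pbij_linl_inv.
move: e2; rewrite /F cJ /N !subSS !subn0 -linearD /= => e2.
have := Mact_inv (phi_shift p n.+1 E A B w + phi_shift p n E A B w) hgV hgV' (fun x _ => erefl).
rewrite e2 linear0 => /esym /eqP.
by rewrite addr_eq0 => /eqP.
Qed.

End Dir2.

Theorem proposition7p5 (k : comPzRingType) (M : FBmodule k) (p : symop M) :
  condB3 p <-> condB3' p.
Proof.
split; last exact: dir1.
move=> h3 n hn S E A B hA hB hAB v.
elim: n hn => [//|n IH hn].
case: n IH hn => [|n] IH hn.
  by rewrite expr2 mulrNN mulr1 scale1r.
by rewrite (rec_step h3) // IH // [in RHS]exprS mulN1r scaleNr.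
Qed.
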